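(* Let $\theta\in(0,\frac{\pi}{2})$ and let $\Sigma^{\tan\theta}\subset\mathbb{R}^4$ be the minimal surface given by the conformal harmonic map \[ \mathbf{X}^{\tan\theta}(U,V)=\Big(\frac{\sin\theta}{\cos\theta}\sinh U\cos V,\ \cosh U\cos V,\ \frac{1}{\cos\theta}\cosh U\sin V,\ U\Big),\qquad (U,V)\in\mathbb{R}^2, \] with coordinates $(\mathbf{x}_1,\mathbf{x}_2,\mathbf{x}_3,\mathbf{x}_4)$ on $\mathbb{R}^4$. Then: (1) For each constant $U_0\in\mathbb{R}$, the level set $\mathcal{C}_{U_0}=\Sigma^{\tan\theta}\cap\{\mathbf{x}_4=U_0\}$ is an ellipse; in particular the neck $\mathcal{C}_0=\Sigma^{\tan\theta}\cap\{\mathbf{x}_4=0\}$ is congruent to the ellipse $\mathbf{x}^2+(\cos^2\theta)\,\mathbf{y}^2=1$. (2) As $U\to\infty$ (or $U\to-\infty$), the ellipse $\mathcal{C}_U$ converges to a circle, in the sense that the ratio of the lengths of its two semi-axes tends to $1$. *)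

(* Defs.v *)
From Stdlib Require Import Reals.
From Coquelicot Require Import Coquelicot.
Open Scope R_scope.

Record R4 := mkR4 { x1 : R; x2 : R; x3 : R; x4 : R }.

Definition add4 (p q : R4) : R4 :=
  mkR4 (x1 p + x1 q) (x2 p + x2 q) (x3 p + x3 q) (x4 p + x4 q).
Definition scal4 (a : R) (p : R4) : R4 :=
  mkR4 (a * x1 p) (a * x2 p) (a * x3 p) (a * x4 p).
Definition dot4 (p q : R4) : R :=
  x1 p * x1 q + x2 p * x2 q + x3 p * x3 q + x4 p * x4 q.

Definition orthonormal2 (e1 e2 : R4) : Prop :=
  dot4 e1 e1 = 1 /\ dot4 e2 e2 = 1 /\ dot4 e1 e2 = 0.

Definition Xmap (theta U V : R) : R4 :=
  mkR4 (sin theta / cos theta * sinh U * cos V)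
       (cosh U * cos V)
       (1 / cos theta * cosh U * sin V)
       U.

Definition Sigma (theta : R) (p : R4) : Prop :=
  exists U V : R, p = Xmap theta U V.

Definition level_set (theta U0 : R) (p : R4) : Prop :=
  Sigma theta p /\ x4 p = U0.

Definition is_ellipse_axes (E : R4 -> Prop) (a b : R) : Prop :=
  0 < a /\ 0 < b /\
  exists c e1 e2 : R4, orthonormal2 e1 e2 /\
    forall p, E p <-> exists t : R,
      p = add4 c (add4 (scal4 (a * cos t) e1) (scal4 (b * sin t) e2)).

Definition is_ellipse (E : R4 -> Prop) : Prop :=
  exists a b : R, is_ellipse_axes E a b.

(* E is congruent to the planar curve {(x,y) : P x y}: it is its image under an
   isometric (affine) embedding (x,y) |-> c + x e1 + y e2 of R^2 into R^4. *)
Definition congruent_to_planar (E : R4 -> Prop) (P : R -> R -> Prop) : Prop :=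
  exists c e1 e2 : R4, orthonormal2 e1 e2 /\
    forall p, E p <-> exists x y : R, P x y /\
      p = add4 c (add4 (scal4 x e1) (scal4 y e2)).

(* Main.v *)
Require Import Defs.
From Stdlib Require Import Reals Lra.
From Coquelicot Require Import Coquelicot.
Open Scope R_scope.

Lemma cosh_pos' (U : R) : 0 < cosh U.
Proof. unfold cosh. pose proof (exp_pos U). pose proof (exp_pos (-U)). lra. Qed.

Lemma level_char (theta U0 : R) (p : R4) :
  level_set theta U0 p <-> exists V, p = Xmap theta U0 V.
Proof.
  split.
  - intros [[U [V ->]] H]. simpl in H. subst. eauto.
  - intros [V ->]. split; [exists U0, V; reflexivity | reflexivity].
Qed.

Lemma R4_eq (a1 a2 a3 a4 b1 b2 b3 b4 : R) :
  a1 = b1 -> a2 = b2 -> a3 = b3 -> a4 = b4 -> mkR4 a1 a2 a3 a4 = mkR4 b1 b2 b3 b4.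
Proof. intros -> -> -> ->; reflexivity. Qed.

Lemma circle_angle (x w : R) : x ^ 2 + w ^ 2 = 1 ->
  exists V, cos V = x /\ sin V = w.
Proof.
  intros H.
  assert (Hx : -1 <= x <= 1) by (split; nra).
  assert (Hs : sqrt (1 - x²) = Rabs w).
  { replace (1 - x²) with (w ^ 2) by (unfold Rsqr; lra).
    rewrite <- sqrt_Rsqr_abs. unfold Rsqr. f_equal. ring. }
  destruct (Rle_dec 0 w) as [Hw|Hw].
  - exists (acos x). rewrite cos_acos, sin_acos by auto. rewrite Hs, Rabs_pos_eq; auto.
  - exists (- acos x). rewrite cos_neg, sin_neg, cos_acos, sin_acos by auto.
    rewrite Hs, Rabs_left by lra. split; [reflexivity| ring].
Qed.

Section S.
Variable theta : R.
Hypothesis Htheta : 0 < theta < PI / 2.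

Let s := sin theta.
Let c := cos theta.

Lemma c_pos : 0 < c.
Proof. unfold c. apply cos_gt_0; lra. Qed.

Lemma sc1 : s ^ 2 + c ^ 2 = 1.
Proof. unfold s, c. pose proof (sin2_cos2 theta). unfold Rsqr in *. lra. Qed.

Definition rr (U : R) := sqrt (s ^ 2 * (sinh U / cosh U) ^ 2 + c ^ 2).
Definition bb (U : R) := cosh U / c.
Definition aa (U : R) := rr U * bb U.

Lemma rr_pos U : 0 < rr U.
Proof. unfold rr. apply sqrt_lt_R0. pose proof c_pos. nra. Qed.

Lemma bb_pos U : 0 < bb U.
Proof. unfold bb. pose proof c_pos. pose proof (cosh_pos' U). apply Rdiv_lt_0_compat; lra. Qed.

Lemma aa_pos U : 0 < aa U.
Proof. unfold aa. pose proof (rr_pos U). pose proof (bb_pos U). nra. Qed.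

Lemma aa_sq U : aa U * aa U = (s / c * sinh U) ^ 2 + cosh U ^ 2.
Proof.
  unfold aa, bb.
  replace (rr U * (cosh U / c) * (rr U * (cosh U / c)))
    with ((rr U * rr U) * (cosh U / c) ^ 2) by ring.
  unfold rr. rewrite sqrt_sqrt.
  2:{ pose proof c_pos. nra. }
  pose proof c_pos. pose proof (cosh_pos' U).
  field. split; lra.
Qed.

Lemma ellipse_U (U0 : R) : is_ellipse_axes (level_set theta U0) (aa U0) (bb U0).
Proof.
  pose proof (aa_pos U0) as Ha. pose proof (bb_pos U0). pose proof c_pos.
  pose proof (aa_sq U0) as Hsq.
  split; [auto|split; [auto|]].
  exists (mkR4 0 0 0 U0), (mkR4 (s / c * sinh U0 / aa U0) (cosh U0 / aa U0) 0 0),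
    (mkR4 0 0 1 0).
  split.
  - unfold orthonormal2, dot4; simpl. split; [|split; ring].
    replace ((s / c * sinh U0 / aa U0) * (s / c * sinh U0 / aa U0) + cosh U0 / aa U0 * (cosh U0 / aa U0) + 0 * 0 + 0 * 0) with (((s / c * sinh U0) ^ 2 + cosh U0 ^ 2) / (aa U0 * aa U0)) by (field; lra).
    rewrite <- Hsq. field. lra.
  - intros p. rewrite level_char. split; intros [V ->]; exists V;
    unfold Xmap, add4, scal4, bb; simpl; fold s c;
    apply R4_eq; field; lra.
Qed.

Lemma ratio_eq U : aa U / bb U = rr U.
Proof. unfold aa. pose proof (bb_pos U). field. lra. Qed.

Definition kp (G : R) := sqrt (s ^ 2 * ((1 - G ^ 2) / (1 + G ^ 2)) ^ 2 + c ^ 2).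
Definition km (G : R) := sqrt (s ^ 2 * ((G ^ 2 - 1) / (G ^ 2 + 1)) ^ 2 + c ^ 2).

Lemma kp_cont : continuous kp 0.
Proof.
  apply (@ex_derive_continuous R_AbsRing R_NormedModule). unfold kp. pose proof c_pos.
  auto_derive. repeat split; try nra. 
Qed.

Lemma km_cont : continuous km 0.
Proof.
  apply (@ex_derive_continuous R_AbsRing R_NormedModule). unfold km. pose proof c_pos.
  auto_derive. repeat split; try nra.
Qed.

Lemma lim_p : is_lim (fun U => aa U / bb U) p_infty 1.
Proof.
  apply (is_lim_ext (fun U => kp (/ exp U))).
  { intros U. rewrite ratio_eq. unfold kp, rr, sinh, cosh. rewrite exp_Ropp.
    pose proof (exp_pos U). f_equal. f_equal. f_equal. field. nra. }
  replace (Finite 1) with (Finite (kp 0)).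
  2:{ f_equal. unfold kp. rewrite <- sqrt_1. f_equal. pose proof sc1. field_simplify; try rewrite sqrt_1; lra. }
  apply is_lim_comp_continuous; [|apply kp_cont].
  replace (Finite 0) with (Rbar_inv p_infty) by reflexivity.
  apply is_lim_inv; [apply is_lim_exp_p | discriminate].
Qed.

Lemma lim_m : is_lim (fun U => aa U / bb U) m_infty 1.
Proof.
  apply (is_lim_ext (fun U => km (exp U))).
  { intros U. rewrite ratio_eq. unfold km, rr, sinh, cosh. rewrite exp_Ropp.
    pose proof (exp_pos U). f_equal. f_equal. f_equal. field. nra. }
  replace (Finite 1) with (Finite (km 0)).
  2:{ f_equal. unfold km. rewrite <- sqrt_1. f_equal. pose proof sc1. field_simplify; try rewrite sqrt_1; lra. }
  apply is_lim_comp_continuous; [apply is_lim_exp_m|apply km_cont].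
Qed.

Lemma neck : congruent_to_planar (level_set theta 0)
    (fun x y => x ^ 2 + (cos theta) ^ 2 * y ^ 2 = 1).
Proof.
  pose proof c_pos.
  exists (mkR4 0 0 0 0), (mkR4 0 1 0 0), (mkR4 0 0 1 0).
  split; [unfold orthonormal2, dot4; simpl; repeat split; ring|].
  intros p. rewrite level_char. fold c. split.
  - intros [V ->]. exists (cos V), (sin V / c). split.
    + pose proof (sin2_cos2 V). unfold Rsqr in *. field_simplify; lra.
    + unfold Xmap, add4, scal4; simpl. fold s c.
      unfold sinh, cosh. rewrite Ropp_0, exp_0.
      apply R4_eq; field; lra.
  - intros [x [y [Hxy ->]]].
    destruct (circle_angle x (c * y)) as [V [Hc Hs]]; [nra|].
    exists V. unfold Xmap, add4, scal4; simpl. fold s c.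
    unfold sinh, cosh. rewrite Ropp_0, exp_0. rewrite Hc, Hs.
    apply R4_eq; field; lra.
Qed.

End S.

Theorem theorem6p3 (theta : R) (Htheta : 0 < theta < PI / 2) :
  (forall U0 : R, is_ellipse (level_set theta U0)) /\
  congruent_to_planar (level_set theta 0)
    (fun x y => x ^ 2 + (cos theta) ^ 2 * y ^ 2 = 1) /\
  (exists a b : R -> R,
     (forall U : R, is_ellipse_axes (level_set theta U) (a U) (b U)) /\
     is_lim (fun U => a U / b U) p_infty 1 /\
     is_lim (fun U => a U / b U) m_infty 1).
Proof.
  split; [|split].
  - intros U0. exists (aa theta U0), (bb theta U0). apply ellipse_U; auto.
  - apply neck; auto.
  - exists (aa theta), (bb theta). split; [intros; apply ellipse_U; auto|].
    split; [apply lim_p|apply lim_m]; auto.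
Qed.
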